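(* For every $n\ge4$, every ortholattice satisfying $n$-Go also satisfies $(n-1)$-Go.
   Context: An ortholattice is a bounded lattice with an operation $'$ satisfying $a''=a$, $a\le b\Rightarrow b'\le a'$, $a\cap a'=0$ and $a\cup a'=1$. Write $a\to b=a'\cup(a\cap b)$. The Godowski identity is $$a_1\overset{\gamma}{\equiv}a_n=(a_1\to a_2)\cap(a_2\to a_3)\cap\cdots\cap(a_{n-1}\to a_n)\cap(a_n\to a_1),$$ and $a_n\overset{\gamma}{\equiv}a_1=(a_n\to a_{n-1})\cap\cdots\cap(a_2\to a_1)\cap(a_1\to a_n)$. $n$-Go is the equation $a_1\overset{\gamma}{\equiv}a_n=a_n\overset{\gamma}{\equiv}a_1$, required for all $a_1,\dots,a_n$. *)

(* Defs.v *)
From Stdlib Require Import Arith List.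

Record Ortholattice := {
  carrier :> Type;
  meet : carrier -> carrier -> carrier;
  join : carrier -> carrier -> carrier;
  compl : carrier -> carrier;
  bot : carrier;
  top : carrier;
  meet_comm : forall a b, meet a b = meet b a;
  join_comm : forall a b, join a b = join b a;
  meet_assoc : forall a b c, meet a (meet b c) = meet (meet a b) c;
  join_assoc : forall a b c, join a (join b c) = join (join a b) c;
  meet_absorb : forall a b, meet a (join a b) = a;
  join_absorb : forall a b, join a (meet a b) = a;
  meet_top : forall a, meet a top = a;
  join_bot : forall a, join a bot = a;
  compl_invol : forall a, compl (compl a) = a;
  compl_antitone : forall a b, meet a b = a -> meet (compl b) (compl a) = compl b;
  meet_compl : forall a, meet a (compl a) = bot;
  join_compl : forall a, join a (compl a) = top
}.

Arguments meet {o}.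
Arguments join {o}.
Arguments compl {o}.

Definition ole {L : Ortholattice} (a b : L) : Prop := meet a b = a.

Definition oimp {L : Ortholattice} (a b : L) : L := join (compl a) (meet a b).

Fixpoint chain_imp {L : Ortholattice} (a : nat -> L) (k : nat) : L :=
  match k with
  | 0 => top L
  | 1 => oimp (a 1) (a 2)
  | S k' => meet (chain_imp a k') (oimp (a k) (a (S k)))
  end.

Definition godowski_fwd {L : Ortholattice} (n : nat) (a : nat -> L) : L :=
  meet (chain_imp a (n - 1)) (oimp (a n) (a 1)).

(* reversed chain: rchain_imp a k = (a n -> a(n-1)) /\ ... /\ (a(n-k+1) -> a(n-k)) *)
Fixpoint rchain_imp {L : Ortholattice} (n : nat) (a : nat -> L) (k : nat) : L :=
  match k with
  | 0 => top L
  | 1 => oimp (a n) (a (n - 1))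
  | S k' => meet (rchain_imp n a k') (oimp (a (n - k')) (a (n - k)))
  end.

Definition godowski_bwd {L : Ortholattice} (n : nat) (a : nat -> L) : L :=
  meet (rchain_imp n a (n - 1)) (oimp (a 1) (a n)).

(* n-Go: for all a_1, ..., a_n (indices 1..n of a; other values irrelevant) *)
Definition nGo (L : Ortholattice) (n : nat) : Prop :=
  forall a : nat -> L, godowski_fwd n a = godowski_bwd n a.

(* Main.v *)
Require Import Defs.
From Stdlib Require Import Arith Lia.

Section H.
Variable L : Ortholattice.

Definition bfun (a : nat -> L) (m i : nat) : L :=
  if Nat.eqb i (S m) then a m else a i.

Lemma bfun_ne a m i : i <> S m -> bfun a m i = a i.
Proof. intro H. unfold bfun. apply Nat.eqb_neq in H. now rewrite H. Qed.

Lemma bfun_eq a m : bfun a m (S m) = a m.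
Proof. unfold bfun. now rewrite Nat.eqb_refl. Qed.

Lemma oimp_self (x : L) : oimp x x = top L.
Proof.
  unfold oimp.
  assert (meet x x = x) as E.
  { rewrite <- (join_absorb L x x) at 2. apply meet_absorb. }
  rewrite E, join_comm. apply join_compl.
Qed.

Lemma top_meet (x : L) : meet (top L) x = x.
Proof. rewrite meet_comm. apply meet_top. Qed.

Lemma chain_b a m k : k < m -> chain_imp (bfun a m) k = chain_imp a k.
Proof.
  induction k as [|k IH]; intro Hk; [reflexivity|].
  destruct k as [|k'].
  - cbn [chain_imp]. rewrite !bfun_ne by lia. reflexivity.
  - change (chain_imp (bfun a m) (S (S k'))) with
      (meet (chain_imp (bfun a m) (S k')) (oimp (bfun a m (S (S k'))) (bfun a m (S (S (S k')))))).
    change (chain_imp a (S (S k'))) with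
      (meet (chain_imp a (S k')) (oimp (a (S (S k'))) (a (S (S (S k')))))).
    rewrite IH by lia. rewrite !bfun_ne by lia. reflexivity.
Qed.

Lemma rchain_b a m k : 1 <= k -> k < m ->
  rchain_imp (S m) (bfun a m) (S k) = rchain_imp m a k.
Proof.
  induction k as [|k IH]; intros H1 H2; [lia|].
  destruct k as [|k'].
  - change (rchain_imp (S m) (bfun a m) 2) with
      (meet (oimp (bfun a m (S m)) (bfun a m (S m - 1)))
            (oimp (bfun a m (S m - 1)) (bfun a m (S m - 2)))).
    change (rchain_imp m a 1) with (oimp (a m) (a (m - 1))).
    replace (S m - 1) with m by lia. replace (S m - 2) with (m - 1) by lia.
    rewrite bfun_eq, !bfun_ne by lia. rewrite oimp_self. apply top_meet.
  - change (rchain_imp (S m) (bfun a m) (S (S (S k')))) with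
      (meet (rchain_imp (S m) (bfun a m) (S (S k')))
            (oimp (bfun a m (S m - S (S k'))) (bfun a m (S m - S (S (S k')))))).
    change (rchain_imp m a (S (S k'))) with
      (meet (rchain_imp m a (S k')) (oimp (a (m - S k')) (a (m - S (S k'))))).
    rewrite IH by lia. rewrite !bfun_ne by lia.
    replace (S m - S (S k')) with (m - S k') by lia.
    replace (S m - S (S (S k'))) with (m - S (S k')) by lia. reflexivity.
Qed.
End H.

Theorem lemma5p7 (n : nat) (hn : 4 <= n) (L : Ortholattice) :
  nGo L n -> nGo L (n - 1).
Proof.
  intros HG a.
  destruct n as [|m]; [lia|].
  replace (S m - 1) with m by lia.
  specialize (HG (bfun L a m)).
  unfold godowski_fwd, godowski_bwd in *.
  replace (S m - 1) with m in HG by lia.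
  destruct m as [|m']; [lia|].
  change (chain_imp (bfun L a (S m')) (S m')) with
    (match m' with 0 => oimp (bfun L a (S m') 1) (bfun L a (S m') 2)
     | _ => meet (chain_imp (bfun L a (S m')) m') (oimp (bfun L a (S m') (S m')) (bfun L a (S m') (S (S m')))) end) in HG.
  destruct m' as [|k]; [lia|].
  rewrite chain_b in HG by lia.
  rewrite bfun_eq, bfun_ne, oimp_self, meet_top in HG by lia.
  rewrite (rchain_b L a (S (S k)) (S k)) in HG by lia.
  rewrite !bfun_ne in HG by lia.
  replace (S (S k) - 1) with (S k) by lia.
  exact HG.
Qed.
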